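(* If a queuing regime $R=(\mathcal{X},\alpha,\xi,(\rho_i)_i,\pi)$ is universally optimal, then there exists a non-idle state $x$ at which preemption occurs, i.e., $\pi(x)=1$.
   Context: Model: an M/M/1 queue with a single server; customers arrive according to a Poisson process with rate $\lambda>0$ and are served at exponential rate $\mu>0$. Each customer incurs cost at rate $c>0$ while in the system and receives reward $r>0$ upon service completion; a customer who reneges gets no reward. Queuing regime: a tuple $(\mathcal{X},\alpha,\xi,(\rho_i)_i,\pi)$ where $\mathcal{X}=\mathcal{X}_0\uplus\mathcal{X}_1\uplus\cdots$ is a set of states partitioned by the number of customers in the system ($\mathcal{X}_0$ is a singleton, the idle state), and $n(x)=n$ for $x\in\mathcal{X}_n$. Customers present are ranked in a queue: position $1$ is being served (work-conserving) and position $n$ is last. If at state $x\in\mathcal{X}_n$ a customer arrives, the arriving customer is placed at position $\pi(x)\in\{1,\dots,n+1\}$ and the state becomes $\alpha(x)\in\mathcal{X}_{n+1}$. If at $x\in\mathcal{X}_n$, $n\ge1$, service is completed, the state becomes $\xi(x)\in\mathcal{X}_{n-1}$. If at $x\in\mathcal{X}_n$ the customer at position $i$ reneges, the state becomes $\rho_i(x)\in\mathcal{X}_{n-1}$. Events do not change the relative order of remaining customers, and $\rho_i(\rho_j(x))=\rho_{j-1}(\rho_i(x))$ for $i<j$, so simultaneous reneging of a set of positions is well defined. Strategies and equilibrium: a Markov strategy profile is a function $\sigma$ on non-idle states with $\sigma(x)\subseteq\{1,\dots,n(x)\}$, the positions of customers who renege simultaneously when the system reaches $x$. It is a Markov perfect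 equilibrium if for every state $x$ it is a Nash equilibrium of the game starting at $x$ in which each customer decides whether to stay or renege. Social optimum: the designer maximizes long-run average welfare (reward $r$ per service minus cost $c$ per unit time per customer present); the optimal policy keeps at most $n^*(\lambda,\mu,c,r)$ customers. A profile $\sigma$ induces the socially optimal behavior if $|\sigma(x)|=\max(n(x)-n^*,0)$ for all non-idle $x$. A regime is universally optimal if for every parameters $(\lambda,\mu,c,r)$ the game admits a Markov perfect equilibrium inducing the socially optimal behavior. *)

(* Defs.v *)
From mathcomp Require Import all_boot all_order all_algebra.
From mathcomp Require Import classical_sets reals constructive_ereal ereal.
Set Implicit Arguments.
Unset Strict Implicit.
Unset Printing Implicit Defensive.
Import Order.TTheory GRing.Theory Num.Theory.
Local Open Scope ring_scope.

(* nst x = n(x) is the number of customers in state x, i.e. x \in     *)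
(* X_{nst x}.  Positions are the naturals 1..nst x (1 = in service).   *)
(* The maps are total on X; their values are only constrained where   *)
(* the paper defines them.                                            *)
Record regime (X : Type) := Regime {
  nst   : X -> nat;
  idle  : X;
  alpha : X -> X;             (* arrival *)
  xi    : X -> X;             (* service completion *)
  rho   : nat -> X -> X;      (* rho i : reneging of position i *)
  pi_pos : X -> nat;           (* position of an arriving customer *)
  idle_n0   : nst idle = 0%N;
  idle_uniq : forall x, nst x = 0%N -> x = idle;
  alpha_n   : forall x, nst (alpha x) = (nst x).+1;
  xi_n      : forall x, (0 < nst x)%N -> nst (xi x) = (nst x).-1;
  rho_n     : forall x i, (1 <= i <= nst x)%N -> nst (rho i x) = (nst x).-1;
  pi_range  : forall x, (1 <= pi_pos x <= (nst x).+1)%N;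
  rho_comm  : forall x i j, (1 <= i)%N -> (i < j)%N -> (j <= nst x)%N ->
                rho i (rho j x) = rho j.-1 (rho i x)
}.

Section Game.
Variables (R : realType) (X : Type) (Q : regime X).

(* A (Markov) strategy profile: sigma x j = "the customer at position j
   reneges when the system reaches x".                                 *)
Definition profile := X -> nat -> bool.

Definition valid_profile (sigma : profile) : Prop :=
  forall x j, sigma x j -> (1 <= j <= nst Q x)%N.

(* simultaneous reneging of the set S of positions (largest first) *)
Definition rho_set (S : nat -> bool) (x : X) : X :=
  foldr (fun j y => if S j then rho Q j y else y) x (iota 1 (nst Q x)).

Definition nonempty_at (S : nat -> bool) (x : X) : bool :=
  has S (iota 1 (nst Q x)).

(* new position of the customer at position p after the positions in S
   (other than p) have reneged *)
Definition pos_after (S : nat -> bool) (p : nat) : nat :=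
  (p - count S (iota 1 p.-1))%N.

Definition pos_arrival (x : X) (p : nat) : nat :=
  if (pi_pos Q x <= p)%N then p.+1 else p.

Variables (lam mu : R).

(* Embedded jump chain of a tagged customer when everybody follows sigma.
   Nodes: (true, x, p)  = the system has just reached x, the tagged
                          customer is at position p, reneging sigma x
                          is about to take place;
          (false, x, p) = the system sojourns in x (no reneging), the
                          tagged customer is at position p; the sojourn
                          lasts Exp(lam+mu) and ends with an arrival
                          (prob. lam/(lam+mu)) or a service completion.
   horizon k b x p = (probability that the tagged customer is served
   within k steps, expected number of sojourns within k steps).       *)
Fixpoint horizon (sigma : profile) (k : nat) (b : bool) (x : X) (p : nat)
    : R * R :=
  match k with
  | 0%N => (0, 0)
  | k'.+1 =>
    if b then
      if sigma x p then (0, 0)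
      else if nonempty_at (sigma x) x then
        horizon sigma k' true (rho_set (sigma x) x) (pos_after (sigma x) p)
      else horizon sigma k' false x p
    else
      let a := lam / (lam + mu) in
      let s := mu / (lam + mu) in
      let A := horizon sigma k' true (alpha Q x) (pos_arrival x p) in
      let B := if p == 1%N then (1, 0)
               else horizon sigma k' true (xi Q x) p.-1 in
      (a * A.1 + s * B.1, 1 + a * A.2 + s * B.2)
  end.

Local Open Scope ereal_scope.

Definition prob_served (sigma : profile) b x p : \bar R :=
  ereal_sup [set ((horizon sigma k b x p).1)%:E | k in [set: nat]].
Definition exp_sojourns (sigma : profile) b x p : \bar R :=
  ereal_sup [set ((horizon sigma k b x p).2)%:E | k in [set: nat]].

(* expected utility of the tagged customer: r * P(served) - c * E[time in
   system], where each sojourn lasts 1/(lam+mu) in expectation *)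
Definition value (c r : R) (sigma : profile) b x p : \bar R :=
  r%:E * prob_served sigma b x p
  - (c / (lam + mu))%:E * exp_sojourns sigma b x p.

(* The game starting at the non-idle state x: the customer at position i
   stays or reneges, the others play sigma x, and sigma is followed
   afterwards.  Reneging yields 0. *)
Definition stay_value (c r : R) (sigma : profile) (x : X) (i : nat) : \bar R :=
  let S := fun j => sigma x j && (j != i) in
  if nonempty_at S x then value c r sigma true (rho_set S x) (pos_after S i)
  else value c r sigma false x i.

Definition nash_at (c r : R) (sigma : profile) (x : X) : Prop :=
  forall i, (1 <= i <= nst Q x)%N ->
    (sigma x i -> stay_value c r sigma x i <= 0) /\
    (~~ sigma x i -> 0 <= stay_value c r sigma x i).

Definition MPE (c r : R) (sigma : profile) : Prop :=
  valid_profile sigma /\ forall x, (0 < nst Q x)%N -> nash_at c r sigma x.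

End Game.

(* Social optimum: long-run average welfare of the M/M/1 queue that    *)
(* keeps at most n customers:  r * mu * P(N >= 1) - c * E[N], with     *)
(* stationary distribution P(N = k) proportional to (lam/mu)^k,        *)
(* k = 0..n.                                                           *)
Definition welfare (R : realType) (lam mu c r : R) (n : nat) : R :=
  let q := lam / mu in
  (r * mu * (\sum_(1 <= k < n.+1) q ^+ k)
   - c * (\sum_(0 <= k < n.+1) k%:R * q ^+ k))
  / (\sum_(0 <= k < n.+1) q ^+ k).

Definition is_nstar (R : realType) (lam mu c r : R) (N : nat) : Prop :=
  (forall m, welfare lam mu c r m <= welfare lam mu c r N) /\
  (forall m, (forall m', welfare lam mu c r m' <= welfare lam mu c r m) ->
     (m <= N)%N).

Definition induces_social_opt (X : Type) (Q : regime X) (sigma : profile X)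
    (N : nat) : Prop :=
  forall x, (0 < nst Q x)%N ->
    count (sigma x) (iota 1 (nst Q x)) = (nst Q x - N)%N.

Definition universally_optimal (R : realType) (X : Type) (Q : regime X)
    : Prop :=
  forall lam mu c r : R, 0 < lam -> 0 < mu -> 0 < c -> 0 < r ->
  forall N, is_nstar lam mu c r N ->
  exists sigma : profile X,
    MPE Q lam mu c r sigma /\ induces_social_opt Q sigma N.

(* Main.v *)
Require Import Defs.
From mathcomp Require Import all_boot all_order all_algebra.
From mathcomp Require Import classical_sets reals constructive_ereal ereal.
From mathcomp Require Import lra zify.
Set Implicit Arguments.
Unset Strict Implicit.
Unset Printing Implicit Defensive.
Import Order.TTheory GRing.Theory Num.Theory.
Local Open Scope ring_scope.


Definition esup (R : realType) (f : nat -> R) : \bar R :=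
  ereal_sup [set (f k)%:E | k in [set: nat]].

Lemma esup_fin (R : realType) (f : nat -> R) y : esup f = y%:E ->
  (forall k, f k <= y) /\ (forall B, (forall k, f k <= B) -> y <= B).
Proof.
move=> E; split.
  by move=> k; rewrite -lee_fin -E; apply: ereal_sup_ubound; exists k.
move=> B HB; rewrite -lee_fin -E; apply: ge_ereal_sup => _ [k _ <-].
by rewrite lee_fin.
Qed.

Lemma esup_ge (R : realType) (f : nat -> R) k : ((f k)%:E <= esup f)%E.
Proof. by apply: ereal_sup_ubound; exists k. Qed.

Lemma esup_le (R : realType) (f : nat -> R) M : (forall k, f k <= M) ->
  (esup f <= M%:E)%E.
Proof. by move=> H; apply: ge_ereal_sup => _ [k _ <-]; rewrite lee_fin. Qed.

Lemma esup_bounded (R : realType) (f : nat -> R) M : (forall k, f k <= M) ->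
  exists y, esup f = y%:E.
Proof.
move=> H; have H1 := esup_le H; have H2 := esup_ge f 0.
move: H1 H2; case: (esup f) => [y _ _| |]; first by exists y.
  by [].
by [].
Qed.

Lemma esup_shift (R : realType) (f : nat -> R) : f 0%N = 0 -> (forall k, 0 <= f k) ->
  esup f = esup (fun k => f k.+1).
Proof.
move=> f0 fp; apply/eqP; rewrite eq_le; apply/andP; split.
  apply: ge_ereal_sup => _ [[|k] _ <-].
    by rewrite f0; apply: le_trans (esup_ge _ 0); rewrite lee_fin.
  exact: (esup_ge (fun k => f k.+1) k).
by apply: ge_ereal_sup => _ [k _ <-]; apply: esup_ge.
Qed.

Lemma val_real (R : realType) (P E : nat -> R) (r c : R) : 0 < c ->
  (forall k, P k <= 1) -> (forall k, 0 <= E k) ->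
  (0 <= r%:E * esup P - c%:E * esup E)%E ->
  exists p e, esup P = p%:E /\ esup E = e%:E /\ 0 <= r * p - c * e.
Proof.
move=> c0 P1 E0 H.
have [p Hp] := esup_bounded P1.
have HE : (0%:E <= esup E)%E by apply: le_trans (esup_ge E 0); rewrite lee_fin.
move: H; rewrite Hp; case: (esup E) HE => [e _ H| _ |].
- by exists p, e; split => //; split => //; move: H; rewrite -EFinM -EFinM -EFinB lee_fin.
- by rewrite gt0_muley ?lte_fin // -EFinM.
- by [].
Qed.



Lemma hor_bounds (R : realType) X (Q : regime X) (sigma : profile X) k b x p :
  let h := horizon Q (1:R) 1 sigma k b x p in
  0 <= h.1 <= 1 /\ 0 <= h.2 /\ h.2 <= k%:R.
Proof.
elim: k b x p => [|k IH] b x p /=; first by rewrite lexx ler01.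
case: b.
  case: (sigma x p); first by rewrite lexx ler01 ler0n.
  case: (nonempty_at _ _ _).
    have [/andP[h1 h2] [h3 h4]] := IH true (rho_set Q (sigma x) x) (pos_after (sigma x) p).
    by rewrite h1 h2 h3 (le_trans h4) // ler_nat.
  have [/andP[h1 h2] [h3 h4]] := IH false x p.
  by rewrite h1 h2 h3 (le_trans h4) // ler_nat.
have HA := IH true (alpha Q x) (pos_arrival Q x p).
have HB : let h := (if p == 1%N then ((1:R), (0:R)) else horizon Q 1 1 sigma k true (xi Q x) p.-1) in
  0 <= h.1 <= 1 /\ 0 <= h.2 /\ h.2 <= k%:R.
  case: (p == 1%N) => /=; first by rewrite ler01 lexx ler0n.
  exact: IH.
move: HA HB => /=.
set A := horizon _ _ _ _ _ _ _ _; set B := (if _ then _ else _).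
rewrite -natr1 /=.
have ha : (1:R) / (1 + 1) = 2^-1 by rewrite mul1r.
rewrite ha.
move=> [/andP[a1 a2] [a3 a4]] [/andP[b1 b2] [b3 b4]].
split; [apply/andP; split|split]; lra.
Qed.




Definition Good (R : realType) X (Q : regime X) (sigma : profile X) : Prop :=
  [/\ forall x, (0 < nst Q x)%N -> pi_pos Q x != 1%N,
      valid_profile Q sigma,
      forall x, (0 < nst Q x)%N -> nash_at Q (1:R) 1 2 5 sigma x &
      induces_social_opt Q sigma 1].

Lemma value_esup (R : realType) X (Q : regime X) (lam mu c r : R) sigma b x p :
  value Q lam mu c r sigma b x p =
  (r%:E * esup (fun k => (horizon Q lam mu sigma k b x p).1) -
   (c / (lam + mu))%:E * esup (fun k => (horizon Q lam mu sigma k b x p).2))%E.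
Proof. by []. Qed.

Lemma one_state (R : realType) X (Q : regime X) sigma (G : Good R Q sigma) y :
  nst Q y = 1%N -> sigma y 1%N = false /\ nonempty_at Q (sigma y) y = false.
Proof.
case: G => _ _ _ Hs Hy; have := Hs y; rewrite /nonempty_at Hy => /(_ isT) /=.
by case: (sigma y 1%N).
Qed.

Lemma pos_arr1 (R : realType) X (Q : regime X) sigma (G : Good R Q sigma) y :
  (0 < nst Q y)%N -> pos_arrival Q y 1 = 1%N.
Proof.
case: G => NP _ _ _ Hy; rewrite /pos_arrival; have := NP y Hy.
have := pi_range Q y; case: (pi_pos Q y) => [|[|n]] //.
Qed.

Lemma stay_eq (R : realType) X (Q : regime X) (c r : R) sigma x p :
  sigma x p = false ->
  value Q 1 1 c r sigma true x p = stay_value Q 1 1 c r sigma x p.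
Proof.
move=> Hp.
have ES : (fun j => sigma x j && (j != p)) = sigma x.
  apply: boolp.funext => j; case: (eqVneq j p) => [->|]; by rewrite ?Hp ?andbT ?andbF.
rewrite /stay_value ES !value_esup.
have H0 : forall k : nat, 0 <= (horizon Q (1:R) 1 sigma k true x p).1 by move=> k; case: (hor_bounds R Q sigma k true x p) => /andP[].
have H1 : forall k : nat, 0 <= (horizon Q (1:R) 1 sigma k true x p).2 by move=> k; case: (hor_bounds R Q sigma k true x p) => _ [].
rewrite (esup_shift _ H0) // (esup_shift _ H1) //=.
by rewrite Hp; case: (nonempty_at _ _ _).
Qed.

Lemma esup_const0 (R : realType) (f : nat -> R) : (forall k, f k = 0) -> esup f = 0%E.
Proof.
move=> H; apply/eqP; rewrite eq_le; apply/andP; split.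
  by apply: esup_le => k; rewrite H.
by have := esup_ge f 0; rewrite H.
Qed.

Lemma Vnonneg (R : realType) X (Q : regime X) sigma (G : Good R Q sigma) x p :
  (0 < nst Q x)%N -> (1 <= p <= nst Q x)%N ->
  (0%E <= value Q (1:R) 1 2 5 sigma true x p)%E.
Proof.
move=> Hx Hp; case Hs: (sigma x p).
  rewrite value_esup !esup_const0 ?mule0 ?sube0 //.
  by case => //= k; rewrite Hs.
  by case => //= k; rewrite Hs.
rewrite stay_eq //; case: G => _ _ Hn _.
have [_ ] := Hn x Hx p Hp; apply; by rewrite Hs.
Qed.

Lemma half (R : realType) : (1:R) / (1 + 1) = 2^-1.
Proof. by rewrite mul1r. Qed.

Lemma twoh (R : realType) : (2:R) / (1 + 1) = 1.
Proof. by rewrite divff. Qed.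

Lemma L2 (R : realType) X (Q : regime X) sigma (G : Good R Q sigma) w :
  nst Q w = 2%N -> sigma w 1%N = false.
Proof.
move=> Hw; case H1: (sigma w 1%N) => //; exfalso.
have G' := G; case: G' => NP Hv Hn Hs.
have H2 : sigma w 2%N = false.
  by have := Hs w; rewrite Hw /= H1 => /(_ isT); case: (sigma w 2%N).
have Hw0 : (0 < nst Q w)%N by rewrite Hw.
have Hw1 : (1 <= 1 <= nst Q w)%N by rewrite Hw.
have Hst := (Hn w Hw0 1%N Hw1).1 H1.
move: Hst; rewrite /stay_value /nonempty_at Hw /= H1 H2 /= value_esup.
have Haw : nst Q (alpha Q w) = 3%N by rewrite alpha_n Hw.
have Ha0 : (0 < nst Q (alpha Q w))%N by rewrite Haw.
have Ha1 : (1 <= 1 <= nst Q (alpha Q w))%N by rewrite Haw.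
have VA := Vnonneg G Ha0 Ha1.
rewrite value_esup twoh in VA.
have [pA [eA [EP [EE HA]]]] := val_real ltr01
  (fun k => (proj2 (andP (proj1 (hor_bounds R Q sigma k true (alpha Q w) 1%N)))))
  (fun k => (proj1 (proj2 (hor_bounds R Q sigma k true (alpha Q w) 1%N)))) VA.
have [uP1 uP2] := esup_fin EP.
have [uE1 uE2] := esup_fin EE.
have hk : forall k, horizon Q (1:R) 1 sigma k.+1 false w 1 =
   (1 / (1 + 1) * (horizon Q 1 1 sigma k true (alpha Q w) 1).1 + 1 / (1 + 1) * 1,
    1 + 1 / (1 + 1) * (horizon Q 1 1 sigma k true (alpha Q w) 1).2 + 1 / (1 + 1) * 0).
  by move=> k; rewrite /= (pos_arr1 G) ?Hw.
have [P EP'] := esup_bounded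
  (fun k => (proj2 (andP (proj1 (hor_bounds R Q sigma k false w 1%N))))).
have hE : forall k, (horizon Q (1:R) 1 sigma k false w 1).2 <= 1 + 2^-1 * eA.
  case => [|k]; first by have := uE1 0%N; rewrite /=; lra.
  by rewrite hk /= half; have := uE1 k; lra.
have [E EE'] := esup_bounded hE.
have [hP1 hP2] := esup_fin EP'.
have [hE1 hE2] := esup_fin EE'.
have HpA : pA <= 2 * P - 1.
  apply: uP2 => k; have := hP1 k.+1; rewrite hk /= half; lra.
have HEE := hE2 _ hE.
rewrite EP' EE' twoh -!EFinM -EFinB lee_fin.
have Hp0 : 0 <= pA by have := uP1 0%N; have := hor_bounds R Q sigma 0 true (alpha Q w) 1; simpl; lra.
lra.
Qed.

Lemma two_count (R : realType) X (Q : regime X) sigma (G : Good R Q sigma) w :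
  nst Q w = 2%N -> sigma w 1%N = false /\ sigma w 2%N = true.
Proof.
move=> Hw; have H1 := L2 G Hw; split => //.
case: G => _ _ _ Hs; have := Hs w; rewrite Hw /= H1 => /(_ isT).
by case: (sigma w 2%N).
Qed.

Lemma two_step (R : realType) X (Q : regime X) sigma (G : Good R Q sigma) y :
  nst Q y = 2%N -> exists y'', nst Q y'' = 1%N /\
  forall k, horizon Q (1:R) 1 sigma k.+2 true y 1 = horizon Q 1 1 sigma k false y'' 1.
Proof.
move=> Hy; have [H1 H2] := two_count G Hy.
have Hr : nst Q (rho Q 2 y) = 1%N by rewrite rho_n Hy.
have [O1 O2] := one_state G Hr.
exists (rho Q 2 y); split => // k.
have Hrs : rho_set Q (sigma y) y = rho Q 2 y by rewrite /rho_set Hy /= H1 H2.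
have Hne : nonempty_at Q (sigma y) y by rewrite /nonempty_at Hy /= H2 orbT.
rewrite /= H1 Hne Hrs.
have -> : pos_after (sigma y) 1 = 1%N by [].
by rewrite O1 O2.
Qed.

Lemma G_unfold (R : realType) X (Q : regime X) sigma (G : Good R Q sigma) y :
  nst Q y = 1%N -> exists y', nst Q y' = 1%N /\ forall k,
  horizon Q (1:R) 1 sigma k.+3 false y 1 =
  (2^-1 * (horizon Q 1 1 sigma k false y' 1).1 + 2^-1,
   1 + 2^-1 * (horizon Q 1 1 sigma k false y' 1).2).
Proof.
move=> Hy.
have Ha : nst Q (alpha Q y) = 2%N by rewrite alpha_n Hy.
have [y' [Hy' Ht]] := two_step G Ha.
exists y'; split => // k.
have -> : horizon Q (1:R) 1 sigma k.+3 false y 1 =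
  (1/(1+1) * (horizon Q 1 1 sigma k.+2 true (alpha Q y) (pos_arrival Q y 1)).1 + 1/(1+1) * 1,
   1 + 1/(1+1) * (horizon Q 1 1 sigma k.+2 true (alpha Q y) (pos_arrival Q y 1)).2 + 1/(1+1) * 0) by [].
by rewrite (pos_arr1 G) ?Hy // Ht half mulr1 mulr0 addr0.
Qed.

Lemma G_E (R : realType) X (Q : regime X) sigma (G : Good R Q sigma) :
  forall n k y, (k <= n)%N -> nst Q y = 1%N ->
  (horizon Q (1:R) 1 sigma k false y 1).2 <= 2.
Proof.
elim => [|n IH] k y Hk Hy.
  have := hor_bounds R Q sigma k false y 1; rewrite /= => -[_ [_ h]].
  by apply: le_trans h _; rewrite ler_nat (leq_trans Hk).
case: k Hk => [|[|[|k]]] Hk.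
- have := hor_bounds R Q sigma 0 false y 1; rewrite /= => -[_ [_ h]].
  by apply: le_trans h _; rewrite ler_nat.
- have := hor_bounds R Q sigma 1 false y 1; move => -[_ [_ h]].
  by apply: le_trans h _; rewrite ler_nat.
- have := hor_bounds R Q sigma 2 false y 1; move => -[_ [_ h]].
  by apply: le_trans h _; rewrite ler_nat.
have [y' [Hy' Hu]] := G_unfold G Hy.
rewrite Hu /=.
have Hk' : (k <= n)%N by lia.
have := IH k y' Hk' Hy'.
lra.
Qed.

Lemma G_P (R : realType) X (Q : regime X) sigma (G : Good R Q sigma) k y (t : R) :
  nst Q y = 1%N ->
  (forall y', nst Q y' = 1%N -> t <= (horizon Q (1:R) 1 sigma k false y' 1).1) ->
  2^-1 + 2^-1 * t <= (horizon Q (1:R) 1 sigma k.+3 false y 1).1.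
Proof.
move=> Hy Ht; have [y' [Hy' Hu]] := G_unfold G Hy.
rewrite Hu /=; have := Ht y' Hy'; lra.
Qed.

Lemma G7 (R : realType) X (Q : regime X) sigma (G : Good R Q sigma) k y :
  nst Q y = 1%N -> 7 / 8 <= (horizon Q (1:R) 1 sigma k.+3.+3.+3 false y 1).1.
Proof.
move=> Hy.
have H0 : forall y', nst Q y' = 1%N -> 0 <= (horizon Q (1:R) 1 sigma k false y' 1).1.
  by move=> y' _; have [/andP[]] := hor_bounds R Q sigma k false y' 1.
have H1 : forall y', nst Q y' = 1%N -> 2^-1 + 2^-1 * 0 <= (horizon Q (1:R) 1 sigma k.+3 false y' 1).1.
  by move=> y' Hy'; apply: G_P.
have H2 : forall y', nst Q y' = 1%N -> 2^-1 + 2^-1 * (2^-1 + 2^-1 * 0) <= (horizon Q (1:R) 1 sigma k.+3.+3 false y' 1).1.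
  by move=> y' Hy'; apply: G_P.
have := G_P G Hy H2; lra.
Qed.

Lemma pos_crit (R : realType) X (Q : regime X) sigma b x p K (pl eu : R) :
  pl <= (horizon Q (1:R) 1 sigma K b x p).1 ->
  (forall k, (horizon Q (1:R) 1 sigma k b x p).2 <= eu) -> 0 < 5 * pl - eu ->
  (0%E < value Q (1:R) 1 2 5 sigma b x p)%E.
Proof.
move=> HK HE Hpos; rewrite value_esup twoh.
have [P EP] := esup_bounded (fun k => (proj2 (andP (proj1 (hor_bounds R Q sigma k b x p))))).
have [E EE] := esup_bounded HE.
have [P1 _] := esup_fin EP; have [_ E2] := esup_fin EE.
have := P1 K; have := E2 _ HE.
rewrite EP EE -!EFinM -EFinB lte_fin; lra.
Qed.

Lemma E_two (R : realType) X (Q : regime X) sigma (G : Good R Q sigma) y :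
  nst Q y = 2%N -> exists y'', nst Q y'' = 1%N /\
  (7/8 <= (horizon Q (1:R) 1 sigma 11 true y 1).1) /\
  (forall k, (horizon Q (1:R) 1 sigma k true y 1).2 <= 2).
Proof.
move=> Hy; have [y'' [Hy'' Ht]] := two_step G Hy.
exists y''; split => //; split; first by rewrite Ht; apply: G7.
case => [|[|k]].
- by rewrite /=; lra.
- have := hor_bounds R Q sigma 1 true y 1; move => -[_ [_ h]].
  by apply: le_trans h _; rewrite ler_nat.
by rewrite Ht; apply: (G_E G (leqnn k) Hy'').
Qed.

Lemma L3 (R : realType) X (Q : regime X) sigma (G : Good R Q sigma) w :
  nst Q w = 3%N -> sigma w 1%N = false.
Proof.
move=> Hw; case H1: (sigma w 1%N) => //; exfalso.
have G' := G; case: G' => NP Hv Hn Hs.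
have Hc : sigma w 2%N = ~~ sigma w 3%N.
  have := Hs w; rewrite Hw /= H1 => /(_ isT).
  by case: (sigma w 2%N); case: (sigma w 3%N).
have Hw0 : (0 < nst Q w)%N by rewrite Hw.
have Hw1 : (1 <= 1 <= nst Q w)%N by rewrite Hw.
have Hst := (Hn w Hw0 1%N Hw1).1 H1.
move: Hst; rewrite /stay_value.
set S := fun j => _.
have Hne : nonempty_at Q S w by rewrite /nonempty_at Hw /S /= H1 Hc; case: (sigma w 3%N).
have [y [Hy Hrs]] : exists y, nst Q y = 2%N /\ rho_set Q S w = y.
  rewrite /rho_set Hw /S /= H1 Hc; case: (sigma w 3%N) => /=.
    by exists (rho Q 3 w); rewrite rho_n Hw.
  by exists (rho Q 2 w); rewrite rho_n Hw.
rewrite Hne Hrs (_ : pos_after S 1 = 1%N) //.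
have [y'' [_ [HP HE]]] := E_two G Hy.
have Hpos : 0 < 5 * (7/8) - 2 :> R by lra.
move=> h2; have h1 := pos_crit HP HE Hpos.
by have := lt_le_trans h1 h2; rewrite ltxx.
Qed.

Lemma final (R : realType) X (Q : regime X) sigma (G : Good R Q sigma) : False.
Proof.
have G' := G; case: G' => NP Hv Hn Hs.
set z := alpha Q (alpha Q (idle Q)).
have Hz : nst Q z = 2%N by rewrite /z !alpha_n idle_n0.
have [H1 H2] := two_count G Hz.
have Hz0 : (0 < nst Q z)%N by rewrite Hz.
have Hz2 : (1 <= 2 <= nst Q z)%N by rewrite Hz.
have Hst := (Hn z Hz0 2%N Hz2).1 H2.
move: Hst; rewrite /stay_value /nonempty_at Hz /= H1 H2 /=.
have Haz : nst Q (alpha Q z) = 3%N by rewrite alpha_n Hz.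
have A1 := L3 G Haz.
have [A2 A3] : sigma (alpha Q z) 2%N /\ sigma (alpha Q z) 3%N.
  have := Hs (alpha Q z); rewrite Haz /= A1 => /(_ isT).
  by case: (sigma (alpha Q z) 2%N); case: (sigma (alpha Q z) 3%N).
have Hp' : sigma (alpha Q z) (pos_arrival Q z 2) by rewrite /pos_arrival; case: ifP.
have Hxz : nst Q (xi Q z) = 1%N by rewrite xi_n Hz.
have [O1 O2] := one_state G Hxz.
have Heq : forall k, horizon Q (1:R) 1 sigma k.+2 false z 2 =
   (2^-1 * (horizon Q 1 1 sigma k false (xi Q z) 1).1,
    1 + 2^-1 * (horizon Q 1 1 sigma k false (xi Q z) 1).2).
  move=> k.
  have -> : horizon Q (1:R) 1 sigma k.+2 false z 2 =
    (1/(1+1) * (horizon Q 1 1 sigma k.+1 true (alpha Q z) (pos_arrival Q z 2)).1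
       + 1/(1+1) * (horizon Q 1 1 sigma k.+1 true (xi Q z) 1).1,
     1 + 1/(1+1) * (horizon Q 1 1 sigma k.+1 true (alpha Q z) (pos_arrival Q z 2)).2
       + 1/(1+1) * (horizon Q 1 1 sigma k.+1 true (xi Q z) 1).2) by [].
  move: Hp'; generalize (pos_arrival Q z 2) => p' Hp'.
  have -> : horizon Q (1:R) 1 sigma k.+1 true (alpha Q z) p' = (0, 0) by rewrite /= Hp'.
  have -> : horizon Q (1:R) 1 sigma k.+1 true (xi Q z) 1 = horizon Q 1 1 sigma k false (xi Q z) 1.
    by rewrite /= O1 O2.
  by rewrite /= half mulr0 add0r addr0.
have HP : 7/16 <= (horizon Q (1:R) 1 sigma 11 false z 2).1.
  rewrite Heq; have := G7 G 0 Hxz; move: (horizon Q 1 1 sigma _ false (xi Q z) 1) => h /=; lra.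
have HE : forall k, (horizon Q (1:R) 1 sigma k false z 2).2 <= 2.
  case => [|[|k]].
  - by rewrite /=; lra.
  - have := hor_bounds R Q sigma 1 false z 2; move => -[_ [_ h]].
    by apply: le_trans h _; rewrite ler_nat.
  rewrite Heq /=; have := G_E G (leqnn k) Hxz; lra.
have Hpos : 0 < 5 * (7/16) - 2 :> R by lra.
move=> h2; have h1 := pos_crit HP HE Hpos.
by have := lt_le_trans h1 h2; rewrite ltxx.
Qed.



Lemma sum_id (R : realType) m :
  2 * (\sum_(0 <= k < m.+1) (k%:R : R) * 1 ^+ k) = m%:R * (m%:R + 1).
Proof.
elim: m => [|m IH]; first by rewrite big_nat1 /= !mul0r mulr0.
rewrite big_nat_recr //= mulrDr IH expr1n mulr1 -natr1; lra.
Qed.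

Lemma W (R : realType) m :
  welfare (1:R) 1 2 5 m = (m%:R * (4 - m%:R)) / (m%:R + 1).
Proof.
rewrite /welfare divr1.
under eq_bigr do rewrite expr1n.
under [X in _ / X]eq_bigr do rewrite expr1n.
rewrite !sumr_const_nat subn1 subn0 /=.
have := sum_id R m.
move: (\sum_(0 <= k < m.+1) _) => S HS.
rewrite -natr1.
congr (_ / _); lra.
Qed.

Lemma nstar1 (R : realType) : is_nstar (1:R) 1 2 5 1.
Proof.
have key : forall m, 2 * (m%:R * (4 - m%:R)) <= 3 * (m%:R + 1) :> R.
  move=> m; case: m => [|[|m]]; first by lra.
    by lra.
  have : 2 <= m.+2%:R :> R by rewrite ler_nat.
  move: (m.+2%:R) => x; nra.
split.
  move=> m; rewrite !W.
  have hm : 0 < m%:R + 1 :> R by rewrite natr1 ltr0Sn.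
  rewrite ler_pdivrMr //.
  have e : (1 * (4 - 1) / (1 + 1) : R) = 3 / 2 by rewrite mul1r; congr (_ / _); lra.
  rewrite e; have := key m; lra.
have e : (1 * (4 - 1) / (1 + 1) : R) = 3 / 2 by rewrite mul1r; congr (_ / _); lra.
move=> m Hm; have := Hm 1%N; rewrite !W /= e.
case: m {Hm} => [|[|m]] //.
have hm : 0 < m.+2%:R + 1 :> R by rewrite natr1 ltr0Sn.
rewrite ler_pdivlMr //.
have : 2 <= m.+2%:R :> R by rewrite ler_nat.
move: (m.+2%:R) => x; nra.
Qed.


Theorem corollary1 (R : realType) (X : Type) (Reg : regime X) :
  universally_optimal R Reg ->
  exists x : X, (0 < nst Reg x)%N /\ pi_pos Reg x = 1%N.
Proof.
move=> H; case: (boolp.pselect (exists x : X, (0 < nst Reg x)%N /\ pi_pos Reg x = 1%N)) => // Hno.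
exfalso.
have NP : forall x, (0 < nst Reg x)%N -> pi_pos Reg x != 1%N.
  by move=> x hx; apply/eqP => hp; apply: Hno; exists x.
have h2 : (0:R) < 2 by lra.
have h5 : (0:R) < 5 by lra.
have [sigma [[Hv Hn] Hs]] := H 1 1 2 5 ltr01 ltr01 h2 h5 1%N (nstar1 R).
have G : Good R Reg sigma by split.
exact: final G.
Qed.
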